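(* Let $\pi\colon (X,T)\to (Y,S)$ be a proximal extension between minimal systems, let $\ell\geq 1$, and let $R\subset\mathbb N$ be a set of $\ell$-recurrence for $(Y,S)$. Then $R$ is a set of $\ell$-recurrence for $(X,T)$.
   Context: A system is a compact metric space with a homeomorphism; minimal means no proper nonempty closed invariant subset. A factor map is a continuous surjection intertwining the maps. Points $x,x'$ are proximal if $\inf_{n\in\mathbb N}d(T^nx,T^nx')=0$; $\pi$ is a proximal extension if each fiber $\pi^{-1}(\{y\})$ consists of pairwise proximal points. $R$ is a set of $\ell$-recurrence for a minimal system $(X,T)$ if for every nonempty open $U\subset X$ there is $n\in R$ with $U\cap T^{-n}U\cap\dots\cap T^{-\ell n}U\ne\emptyset$. *)

(* Defs.v *)
From Stdlib Require Import Reals List.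
Open Scope R_scope.

Record MetricSpace := {
  carrier :> Type;
  dist : carrier -> carrier -> R;
  dist_nonneg : forall x y, 0 <= dist x y;
  dist_eq0 : forall x y, dist x y = 0 <-> x = y;
  dist_sym : forall x y, dist x y = dist y x;
  dist_tri : forall x y z, dist x z <= dist x y + dist y z
}.

Arguments dist {m} _ _.

Definition is_open {M : MetricSpace} (U : M -> Prop) : Prop :=
  forall x, U x -> exists eps, 0 < eps /\ forall y, dist x y < eps -> U y.

Definition is_closed {M : MetricSpace} (A : M -> Prop) : Prop :=
  is_open (fun x => ~ A x).

Definition compact (M : MetricSpace) : Prop :=
  forall (I : Type) (U : I -> M -> Prop),
    (forall i, is_open (U i)) -> (forall x, exists i, U i x) ->
    exists l : list I, forall x, exists i, In i l /\ U i x.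

Definition continuous {M N : MetricSpace} (f : M -> N) : Prop :=
  forall x eps, 0 < eps -> exists delta, 0 < delta /\
    forall y, dist x y < delta -> dist (f x) (f y) < eps.

Definition homeomorphism {M : MetricSpace} (T : M -> M) : Prop :=
  exists Tinv : M -> M, continuous T /\ continuous Tinv /\
    (forall x, Tinv (T x) = x) /\ (forall x, T (Tinv x) = x).

Definition is_system (M : MetricSpace) (T : M -> M) : Prop :=
  compact M /\ homeomorphism T.

Definition invariant {M : MetricSpace} (T : M -> M) (A : M -> Prop) : Prop :=
  forall y, A y <-> exists x, A x /\ T x = y.

Definition minimal (M : MetricSpace) (T : M -> M) : Prop :=
  is_system M T /\
  forall A : M -> Prop, is_closed A -> invariant T A -> (exists x, A x) ->
    forall x, A x.

Definition factor_map {X Y : MetricSpace} (T : X -> X) (S : Y -> Y) (pi : X -> Y) : Prop :=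
  continuous pi /\ (forall y, exists x, pi x = y) /\ (forall x, pi (T x) = S (pi x)).

Definition proximal {X : MetricSpace} (T : X -> X) (x x' : X) : Prop :=
  forall eps, 0 < eps -> exists n : nat, dist (Nat.iter n T x) (Nat.iter n T x') < eps.

Definition proximal_extension {X Y : MetricSpace} (T : X -> X) (S : Y -> Y) (pi : X -> Y) : Prop :=
  factor_map T S pi /\ forall x x', pi x = pi x' -> proximal T x x'.

Definition set_of_recurrence (l : nat) (Rset : nat -> Prop) (M : MetricSpace) (T : M -> M) : Prop :=
  forall U : M -> Prop, is_open U -> (exists x, U x) ->
    exists n, Rset n /\ exists x, forall j, (j <= l)%nat -> U (Nat.iter (j * n) T x).

(* Main.v *)
Require Import Defs.
From Stdlib Require Import Reals List Lra Lia Classical ClassicalEpsilon.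
Local Notation dist := Defs.dist.
Local Notation compact := Defs.compact.
Local Notation continuous := Defs.continuous.
Local Notation is_open := Defs.is_open.
Local Notation is_closed := Defs.is_closed.
Local Notation dist_tri := Defs.dist_tri.
Local Notation dist_sym := Defs.dist_sym.
Local Notation dist_eq0 := Defs.dist_eq0.
Local Notation dist_nonneg := Defs.dist_nonneg.
Open Scope R_scope.

Lemma choice_nat {A : Type} (P : nat -> A -> Prop) :
  (forall n, exists a, P n a) -> exists f : nat -> A, forall n, P n (f n).
Proof.
  intros H. exists (fun n => proj1_sig (constructive_indefinite_description _ (H n))).
  intros n. exact (proj2_sig (constructive_indefinite_description _ (H n))).
Qed.

Lemma ball_open {M : MetricSpace} (c : M) (e : R) : is_open (fun y => dist c y < e).
Proof.
  intros x Hx. exists (e - dist c x). split; [lra|].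
  intros y Hy. pose proof (dist_tri M c x y). lra.
Qed.

Lemma dist_refl0 {M : MetricSpace} (x : M) : dist x x = 0.
Proof. apply (proj2 (dist_eq0 M x x)); reflexivity. Qed.

Lemma dist_zero {M : MetricSpace} (x y : M) : (forall e, 0 < e -> dist x y < e) -> x = y.
Proof.
  intros H. apply (dist_eq0 M).
  destruct (Rle_lt_or_eq_dec 0 (dist x y) (dist_nonneg M x y)) as [Hl|Hl].
  - specialize (H _ Hl). lra.
  - symmetry; exact Hl.
Qed.

Lemma list_min_pos {I : Type} (f : I -> R) (L : list I) :
  (forall i, In i L -> 0 < f i) -> exists e, 0 < e /\ forall i, In i L -> e <= f i.
Proof.
  induction L as [|a L IH]; intros H.
  - exists 1. split; [lra|]. intros i [].
  - destruct IH as [e [He He']]. { intros i Hi. apply H. right; exact Hi. }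
    exists (Rmin e (f a)). split.
    + apply Rmin_glb_lt; [lra| apply H; left; reflexivity].
    + intros i [<-|Hi]. apply Rmin_r. eapply Rle_trans; [apply Rmin_l| apply He'; exact Hi].
Qed.

Lemma list_max_nat {I : Type} (g : I -> nat) (L : list I) :
  exists N, forall i, In i L -> (g i <= N)%nat.
Proof.
  induction L as [|a L IH].
  - exists 0%nat. intros i [].
  - destruct IH as [N HN]. exists (Nat.max N (g a)). intros i [<-|Hi]. lia. specialize (HN i Hi). lia.
Qed.

Lemma cluster2 (M : MetricSpace) (HM : compact M) (a b : nat -> M) :
  exists p q, forall eps N, 0 < eps -> exists k, (N <= k)%nat /\ dist (a k) p < eps /\ dist (b k) q < eps.
Proof.
  apply NNPP. intros Hn.
  assert (H : forall p q, exists eps N, 0 < eps /\ forall k, (N <= k)%nat -> ~ (dist (a k) p < eps /\ dist (b k) q < eps)).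
  { intros p q. apply NNPP; intros H1. apply Hn. exists p, q. intros eps N Heps.
    apply NNPP; intros H2. apply H1. exists eps, N. split; [exact Heps|].
    intros k Hk Hc. apply H2. exists k. tauto. }
  assert (Hp : forall p, exists eps N, 0 < eps /\ forall k, (N <= k)%nat -> ~ dist (a k) p < eps).
  { intros p.
    pose (I := {t : M * R * nat | 0 < snd (fst t) /\ forall k, (snd t <= k)%nat ->
               ~ (dist (a k) p < snd (fst t) /\ dist (b k) (fst (fst t)) < snd (fst t))}).
    destruct (HM I (fun i y => dist (fst (fst (proj1_sig i))) y < snd (fst (proj1_sig i)))) as [L HL].
    - intros i. apply ball_open.
    - intros y. destruct (H p y) as [e [N [He HN]]].
      exists (exist _ (y, e, N) (conj He HN)). simpl. rewrite dist_refl0. exact He.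
    - destruct (list_min_pos (fun i : I => snd (fst (proj1_sig i))) L) as [e [He He']].
      { intros i _. exact (proj1 (proj2_sig i)). }
      destruct (list_max_nat (fun i : I => snd (proj1_sig i)) L) as [N HN].
      exists e, N. split; [exact He|]. intros k Hk Hak.
      destruct (HL (b k)) as [i [Hi Hbi]].
      specialize (He' i Hi). specialize (HN i Hi).
      destruct i as [[[q e'] N'] [Hpos Hprop]]; simpl in *.
      apply (Hprop k); [lia|]. split; [lra|]. rewrite dist_sym; exact Hbi. }
  pose (I := {t : M * R * nat | 0 < snd (fst t) /\ forall k, (snd t <= k)%nat ->
               ~ dist (a k) (fst (fst t)) < snd (fst t)}).
  destruct (HM I (fun i y => dist (fst (fst (proj1_sig i))) y < snd (fst (proj1_sig i)))) as [L HL].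
  - intros i. apply ball_open.
  - intros y. destruct (Hp y) as [e [N [He HN]]].
    exists (exist _ (y, e, N) (conj He HN)). simpl. rewrite dist_refl0. exact He.
  - destruct (list_max_nat (fun i : I => snd (proj1_sig i)) L) as [N HN].
    destruct (HL (a N)) as [i [Hi Hai]].
    specialize (HN i Hi).
    destruct i as [[[q e'] N'] [Hpos Hprop]]; simpl in *.
    apply (Hprop N); [lia|]. rewrite dist_sym; exact Hai.
Qed.

Lemma iter_cont (X : MetricSpace) (T : X -> X) : continuous T -> forall m, continuous (Nat.iter m T).
Proof.
  intros HT m. induction m as [|m IH]; intros x eps Heps.
  - exists eps; split; [exact Heps|]. intros y Hy; exact Hy.
  - destruct (HT (Nat.iter m T x) eps Heps) as [d [Hd Hd']]. destruct (IH x d Hd) as [d2 [Hd2 Hd2']].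
    exists d2. split; auto. intros y Hy. simpl. apply Hd'. apply Hd2'. exact Hy.
Qed.

Lemma iter_plus {A} (f : A -> A) a b x : Nat.iter (a + b) f x = Nat.iter a f (Nat.iter b f x).
Proof. apply Nat.iter_add. Qed.

Lemma iter_comm_map {X Y : Type} (T : X -> X) (Sm : Y -> Y) (pi : X -> Y) :
  (forall x, pi (T x) = Sm (pi x)) -> forall m x, pi (Nat.iter m T x) = Nat.iter m Sm (pi x).
Proof. intros H m x. induction m; simpl; [reflexivity| rewrite H, IHm; reflexivity]. Qed.

Lemma fwd_dense (X : MetricSpace) (T : X -> X) : minimal X T ->
  forall x0 w e, 0 < e -> exists n, dist w (Nat.iter n T x0) < e.
Proof.
  intros [[HX [Tinv [HT [HTi [H1 H2]]]]] Hmin] x0 w e He.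
  pose (om := fun z => forall eps N, 0 < eps -> exists n, (N <= n)%nat /\ dist z (Nat.iter n T x0) < eps).
  assert (Hcl : is_closed om).
  { intros z Hz. unfold om in Hz.
    assert (exists eps N, 0 < eps /\ forall n, (N <= n)%nat -> ~ dist z (Nat.iter n T x0) < eps) as [eps [N [Heps HN]]].
    { apply NNPP; intros Hc; apply Hz; intros eps N Heps. apply NNPP; intros Hc2. apply Hc.
      exists eps, N; split; auto. intros n Hn Hd; apply Hc2; exists n; auto. }
    exists (eps/2). split; [lra|]. intros y Hy Hom. destruct (Hom (eps/2) N) as [n [Hn Hd]]; [lra|].
    apply (HN n Hn). pose proof (dist_tri X z y (Nat.iter n T x0)). lra. }
  assert (Hinv : invariant T om).
  { intros y; split.
    - intros Hy. exists (Tinv y). split; [|apply H2].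
      intros eps N Heps. destruct (HTi y eps Heps) as [d [Hd Hd']].
      destruct (Hy d (Datatypes.S N) Hd) as [n [Hn Hdn]]. destruct n as [|n]; [lia|].
      exists n. split; [lia|]. specialize (Hd' _ Hdn). simpl in Hd'. rewrite H1 in Hd'. exact Hd'.
    - intros [x [Hx <-]]. intros eps N Heps. destruct (HT x eps Heps) as [d [Hd Hd']].
      destruct (Hx d N Hd) as [n [Hn Hdn]]. exists (Datatypes.S n). split; [lia|]. simpl. apply Hd'. exact Hdn. }
  assert (Hne : exists z, om z).
  { destruct (cluster2 X HX (fun n => Nat.iter n T x0) (fun n => Nat.iter n T x0)) as [p [q Hp]].
    exists p. intros eps N Heps. destruct (Hp eps N Heps) as [k [Hk [Hd _]]]. exists k. split; auto.
    rewrite dist_sym. exact Hd. }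
  destruct (Hmin om Hcl Hinv Hne w e 0%nat He) as [n [_ Hn]]. exists n. exact Hn.
Qed.

Lemma arch_inv (e : R) : 0 < e -> exists N : nat, forall k, (N <= k)%nat -> / INR (Datatypes.S k) < e.
Proof.
  intros He. destruct (archimed_cor1 e He) as [N [HN HN0]]. exists N. intros k Hk.
  eapply Rle_lt_trans; [|exact HN]. apply Rinv_le_contravar.
  - apply lt_0_INR. exact HN0.
  - apply le_INR. lia.
Qed.

Lemma unif_cont {M1 M2 : MetricSpace} (HM : compact M1) (f : M1 -> M2) : continuous f ->
  forall eps, 0 < eps -> exists eta, 0 < eta /\ forall a b, dist a b < eta -> dist (f a) (f b) < eps.
Proof.
  intros Hf eps Heps. apply NNPP; intros Hn.
  assert (H : forall k : nat, exists ab : M1 * M1, dist (fst ab) (snd ab) < / INR (Datatypes.S k) /\ ~ dist (f (fst ab)) (f (snd ab)) < eps).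
  { intros k. apply NNPP; intros Hk. apply Hn. exists (/ INR (Datatypes.S k)). split.
    - apply Rinv_0_lt_compat. apply lt_0_INR. lia.
    - intros a b Hab. apply NNPP; intros Hc. apply Hk. exists (a,b). simpl. auto. }
  destruct (choice_nat _ H) as [g Hg].
  destruct (cluster2 M1 HM (fun k => fst (g k)) (fun k => fst (g k))) as [p [q0 Hp]].
  destruct (Hf p (eps/2)) as [d [Hd Hd']]; [lra|].
  destruct (arch_inv (d/2)) as [K HK]; [lra|].
  destruct (Hp (d/2) K) as [k [Hk [Hdk _]]]; [lra|].
  destruct (Hg k) as [H1 H2]. apply H2.
  specialize (HK k Hk).
  assert (Ha : dist p (fst (g k)) < d/2) by (rewrite dist_sym; lra).
  assert (Hb : dist p (snd (g k)) < d) by (pose proof (dist_tri M1 p (fst (g k)) (snd (g k))); lra).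
  assert (Ha2 : dist p (fst (g k)) < d) by lra. pose proof (Hd' _ Ha2) as A. pose proof (Hd' _ Hb) as B.
  pose proof (dist_tri M2 (f (fst (g k))) (f p) (f (snd (g k)))) as C.
  rewrite (dist_sym M2 (f (fst (g k))) (f p)) in C. lra.
Qed.

Lemma unif_cont_iter {M : MetricSpace} (HM : compact M) (f : M -> M) : continuous f ->
  forall N eps, 0 < eps -> exists eta, 0 < eta /\ forall a b, dist a b < eta ->
    forall m, (m <= N)%nat -> dist (Nat.iter m f a) (Nat.iter m f b) < eps.
Proof.
  intros Hf N. induction N as [|N IH]; intros eps Heps.
  - exists eps. split; auto. intros a b Hab m Hm. replace m with 0%nat by lia. exact Hab.
  - destruct (IH eps Heps) as [e1 [He1 H1]].
    destruct (unif_cont HM (Nat.iter (Datatypes.S N) f) (iter_cont M f Hf (Datatypes.S N)) eps Heps) as [e2 [He2 H2]].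
    exists (Rmin e1 e2). split. { apply Rmin_glb_lt; auto. }
    intros a b Hab m Hm. destruct (Nat.eq_dec m (Datatypes.S N)) as [->|Hne].
    + apply H2. eapply Rlt_le_trans; [exact Hab| apply Rmin_r].
    + apply H1; [eapply Rlt_le_trans; [exact Hab| apply Rmin_l] | lia].
Qed.

Lemma synd (X : MetricSpace) (T : X -> X) : minimal X T ->
  forall x0 r, 0 < r -> exists N, forall p, exists m, (m <= N)%nat /\ dist x0 (Nat.iter m T p) < r.
Proof.
  intros Hm x0 r Hr. pose proof Hm as [[HX [Tinv [HT _]]] _].
  apply NNPP; intros Hn.
  assert (H : forall N, exists p, forall m, (m <= N)%nat -> ~ dist x0 (Nat.iter m T p) < r).
  { intros N. apply NNPP; intros HN. apply Hn. exists N. intros p. apply NNPP; intros Hp. apply HN.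
    exists p. intros m Hm' Hd. apply Hp. exists m; auto. }
  destruct (choice_nat _ H) as [g Hg].
  destruct (cluster2 X HX g g) as [p [q0 Hp]].
  destruct (fwd_dense X T Hm p x0 (r/2)) as [m Hm2]; [lra|].
  destruct (iter_cont X T HT m p (r/2)) as [d [Hd Hd']]; [lra|].
  destruct (Hp d m Hd) as [k [Hk [Hdk _]]].
  apply (Hg k m Hk).
  rewrite dist_sym in Hdk. specialize (Hd' _ Hdk).
  pose proof (dist_tri X x0 (Nat.iter m T p) (Nat.iter m T (g k))). lra.
Qed.

Lemma prox_unif (X Y : MetricSpace) (T : X -> X) (Sm : Y -> Y) (pi : X -> Y) :
  minimal X T -> proximal_extension T Sm pi ->
  forall eta, 0 < eta -> exists N d, 0 < d /\ forall p q, dist (pi p) (pi q) < d ->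
    exists m, (m <= N)%nat /\ dist (Nat.iter m T p) (Nat.iter m T q) < eta.
Proof.
  intros Hm [[Hpi _] Hprox] eta Heta. pose proof Hm as [[HX [Tinv [HT _]]] _].
  apply NNPP; intros Hn.
  assert (H : forall k : nat, exists pq : X * X, dist (pi (fst pq)) (pi (snd pq)) < / INR (Datatypes.S k) /\
     forall m, (m <= k)%nat -> ~ dist (Nat.iter m T (fst pq)) (Nat.iter m T (snd pq)) < eta).
  { intros k. apply NNPP; intros Hk. apply Hn. exists k, (/ INR (Datatypes.S k)). split.
    - apply Rinv_0_lt_compat, lt_0_INR; lia.
    - intros p q Hpq. apply NNPP; intros Hc. apply Hk. exists (p, q). simpl. split; auto.
      intros m Hmk Hd. apply Hc. exists m. auto. }
  destruct (choice_nat _ H) as [g Hg].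
  destruct (cluster2 X HX (fun k => fst (g k)) (fun k => snd (g k))) as [p [q Hpq]].
  assert (Heq : pi p = pi q).
  { apply dist_zero. intros e He.
    destruct (Hpi p (e/3)) as [d1 [Hd1 Hd1']]; [lra|].
    destruct (Hpi q (e/3)) as [d2 [Hd2 Hd2']]; [lra|].
    destruct (arch_inv (e/3)) as [K HK]; [lra|].
    destruct (Hpq (Rmin d1 d2) K) as [k [Hk [Ha Hb]]]. { apply Rmin_glb_lt; auto. }
    simpl in Ha, Hb. specialize (HK k Hk). destruct (Hg k) as [G1 _].
    rewrite dist_sym in Ha, Hb.
    assert (A : dist (pi p) (pi (fst (g k))) < e/3).
    { apply Hd1'. eapply Rlt_le_trans; [exact Ha|apply Rmin_l]. }
    assert (B : dist (pi q) (pi (snd (g k))) < e/3).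
    { apply Hd2'. eapply Rlt_le_trans; [exact Hb|apply Rmin_r]. }
    pose proof (dist_tri Y (pi p) (pi (fst (g k))) (pi q)) as C1.
    pose proof (dist_tri Y (pi (fst (g k))) (pi (snd (g k))) (pi q)) as C2.
    rewrite (dist_sym Y (pi (snd (g k))) (pi q)) in C2. lra. }
  destruct (Hprox p q Heq (eta/3)) as [m Hm3]; [lra|].
  destruct (iter_cont X T HT m p (eta/3)) as [d1 [Hd1 Hd1']]; [lra|].
  destruct (iter_cont X T HT m q (eta/3)) as [d2 [Hd2 Hd2']]; [lra|].
  destruct (Hpq (Rmin d1 d2) m) as [k [Hk [Ha Hb]]]. { apply Rmin_glb_lt; auto. }
  simpl in Ha, Hb. destruct (Hg k) as [_ G2]. apply (G2 m Hk).
  rewrite dist_sym in Ha, Hb.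
  assert (A : dist (Nat.iter m T p) (Nat.iter m T (fst (g k))) < eta/3).
  { apply Hd1'. eapply Rlt_le_trans; [exact Ha|apply Rmin_l]. }
  assert (B : dist (Nat.iter m T q) (Nat.iter m T (snd (g k))) < eta/3).
  { apply Hd2'. eapply Rlt_le_trans; [exact Hb|apply Rmin_r]. }
  pose proof (dist_tri X (Nat.iter m T (fst (g k))) (Nat.iter m T p) (Nat.iter m T (snd (g k)))) as C1.
  pose proof (dist_tri X (Nat.iter m T p) (Nat.iter m T q) (Nat.iter m T (snd (g k)))) as C2.
  rewrite (dist_sym X (Nat.iter m T (fst (g k))) (Nat.iter m T p)) in C1. lra.
Qed.

Lemma key (X Y : MetricSpace) (T : X -> X) (Sm : Y -> Y) (pi : X -> Y) :
  minimal X T -> minimal Y Sm -> proximal_extension T Sm pi -> forall x0 : X,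
  forall k r, 0 < r -> exists N d, 0 < d /\ forall p : nat -> X,
    (forall j, (j <= k)%nat -> dist (pi (p j)) (pi (p 0%nat)) < d) ->
    exists m, (m <= N)%nat /\ forall j, (j <= k)%nat -> dist x0 (Nat.iter m T (p j)) < r.
Proof.
  intros HmX HmY Hpe x0 k. pose proof HmX as [[HX [Ti [HT _]]] _].
  pose proof HmY as [[HY [Si [HS _]]] _].
  pose proof Hpe as [[Hpi [_ Hcomm]] _].
  induction k as [|k IH]; intros r Hr.
  - destruct (synd X T HmX x0 r Hr) as [N HN]. exists N, 1. split; [lra|]. intros p _.
    destruct (HN (p 0%nat)) as [m [Hm Hd]]. exists m. split; auto. intros j Hj.
    replace j with 0%nat by lia. exact Hd.
  - destruct (IH (r/2)) as [N [d [Hd HN]]]; [lra|].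
    destruct (unif_cont_iter HX T HT N (r/2)) as [eta [Heta Heta']]; [lra|].
    destruct (prox_unif X Y T Sm pi HmX Hpe eta Heta) as [N2 [d2 [Hd2 HN2]]].
    destruct (unif_cont_iter HY Sm HS N2 d Hd) as [z [Hz Hz']].
    exists (N + N2)%nat, (Rmin z (d2/2)). split. { apply Rmin_glb_lt; lra. }
    intros p Hp.
    assert (Hp' : forall j, (j <= Datatypes.S k)%nat -> dist (pi (p j)) (pi (p 0%nat)) < z /\
                                  dist (pi (p j)) (pi (p 0%nat)) < d2/2).
    { intros j Hj. specialize (Hp j Hj). split; eapply Rlt_le_trans; try exact Hp; [apply Rmin_l|apply Rmin_r]. }
    destruct (HN2 (p k) (p (Datatypes.S k))) as [m [Hm Hdm]].
    { destruct (Hp' k ltac:(lia)) as [_ A]. destruct (Hp' (Datatypes.S k) ltac:(lia)) as [_ B].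
      pose proof (dist_tri Y (pi (p k)) (pi (p 0%nat)) (pi (p (Datatypes.S k)))) as C.
      rewrite (dist_sym Y (pi (p 0%nat)) (pi (p (Datatypes.S k)))) in C. lra. }
    pose (q := fun j => Nat.iter m T (p j)).
    destruct (HN q) as [m' [Hm' Hq]].
    { intros j Hj. unfold q. rewrite !(iter_comm_map T Sm pi Hcomm).
      apply (Hz' (pi (p j)) (pi (p 0%nat))); [apply (Hp' j); lia| exact Hm]. }
    exists (m' + m)%nat. split; [lia|]. intros j Hj.
    rewrite iter_plus.
    change (Nat.iter m' T (Nat.iter m T (p j))) with (Nat.iter m' T (q j)).
    destruct (Nat.eq_dec j (Datatypes.S k)) as [->|Hne].
    + pose proof (Hq k ltac:(lia)) as A. pose proof (Heta' (q k) (q (Datatypes.S k)) Hdm m' Hm') as B.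
      pose proof (dist_tri X x0 (Nat.iter m' T (q k)) (Nat.iter m' T (q (Datatypes.S k)))). lra.
    + pose proof (Hq j ltac:(lia)). lra.
Qed.

Theorem mainTheorem4 (X Y : MetricSpace) (T : X -> X) (S : Y -> Y) (pi : X -> Y)
  (l : nat) (Rset : nat -> Prop) :
  minimal X T -> minimal Y S -> proximal_extension T S pi -> (1 <= l)%nat ->
  set_of_recurrence l Rset Y S -> set_of_recurrence l Rset X T.
Proof.
  intros HmX HmY Hpe Hl Hrec U HU [x0 Hx0].
  destruct (HU x0 Hx0) as [e [He HUe]].
  pose proof Hpe as [[Hpi [Hsurj Hcomm]] _].
  destruct (key X Y T S pi HmX HmY Hpe x0 l e He) as [N [d [Hd HN]]].
  destruct (Hrec (fun y => dist (pi x0) y < d/2) (ball_open _ _)) as [n [Hn [y Hy]]].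
  { exists (pi x0). rewrite dist_refl0. lra. }
  destruct (Hsurj y) as [x Hx].
  destruct (HN (fun j => Nat.iter (j * n) T x)) as [m [_ Hm]].
  { intros j Hj. cbv beta. rewrite !(iter_comm_map T S pi Hcomm), Hx.
    pose proof (Hy j Hj) as A. pose proof (Hy 0%nat ltac:(lia)) as B.
    pose proof (dist_tri Y (Nat.iter (j*n) S y) (pi x0) (Nat.iter (0*n) S y)) as C.
    rewrite (dist_sym Y (Nat.iter (j*n) S y) (pi x0)) in C. lra. }
  exists n. split; [exact Hn|]. exists (Nat.iter m T x). intros j Hj.
  apply HUe. rewrite <- iter_plus, Nat.add_comm, iter_plus. exact (Hm j Hj).
Qed.
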